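(* For every integer $g \geq 1$, the matching number (the maximum cardinality of a matching) of the graph $\mathcal{F}_g$ is $\frac{4^g+8}{6}$.
   Context: The graphs $\mathcal{F}_g$, $g\ge 1$, are defined recursively. $\mathcal{F}_1$ is the 4-cycle (quadrangle). For $g>1$, $\mathcal{F}_g$ is obtained from $\mathcal{F}_{g-1}$ by replacing every edge $\{v_i,v_j\}$ of $\mathcal{F}_{g-1}$ by a quadrangle in which $v_i$ and $v_j$ are diagonal vertices: the edge $\{v_i,v_j\}$ is deleted, two new vertices $w,w'$ are added, and the four edges $\{v_i,w\},\{w,v_j\},\{v_i,w'\},\{w',v_j\}$ are added. Thus $\mathcal{F}_g$ has $\frac{2}{3}(4^g+2)$ vertices and $4^g$ edges. A matching is a set of edges no two of which share a vertex. *)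

(* Defs.v *)
From mathcomp Require Import all_boot.
Set Implicit Arguments. Unset Strict Implicit. Unset Printing Implicit Defensive.

(* A finite graph given by its number of vertices n (vertices 0..n-1)
   and its list of edges (pairs of vertices). *)
Record graph := Graph { nverts : nat; edges : seq (nat * nat) }.

Definition quadrangle : graph :=
  Graph 4 [:: (0, 1); (1, 2); (2, 3); (3, 0)].

(* Replace the k-th edge {a,b} by a quadrangle a - w - b - w' - a with
   fresh vertices w = n + 2k, w' = n + 2k + 1 (the edge {a,b} is deleted). *)
Definition replace_edges (G : graph) : graph :=
  let n := nverts G in
  let E := edges G in
  Graph (n + 2 * size E)
    (flatten [seq let e := nth (0, 0) E k in
                  [:: (e.1, n + 2 * k); (n + 2 * k, e.2);
                      (e.1, (n + 2 * k).+1); ((n + 2 * k).+1, e.2)]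
             | k <- iota 0 (size E)]).

(* F g for g >= 1: F 1 = quadrangle, F (g+1) = replace_edges (F g).
   (F 0 is set to the quadrangle as well; it is never used.) *)
Fixpoint F_aux (h : nat) : graph :=
  if h is h'.+1 then replace_edges (F_aux h') else quadrangle.
Definition F (g : nat) : graph := F_aux g.-1.

Definition is_matching (G : graph) (M : {set 'I_(size (edges G))}) : bool :=
  [forall i in M, forall j in M, (i != j) ==>
     let ei := nth (0, 0) (edges G) i in
     let ej := nth (0, 0) (edges G) j in
     [&& ei.1 != ej.1, ei.1 != ej.2, ei.2 != ej.1 & ei.2 != ej.2]].

Definition matching_number (G : graph) : nat :=
  \max_(M : {set 'I_(size (edges G))} | is_matching M) #|M|.

(* Main.v *)
Require Import Defs.
From mathcomp Require Import all_boot.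
From mathcomp Require Import zify.
Set Implicit Arguments. Unset Strict Implicit.

Lemma mn_ub (G : graph) m (c : nat * nat -> nat) :
  (forall e, e \in edges G -> c e < m) ->
  (forall e e', e \in edges G -> e' \in edges G -> c e = c e' ->
     [|| e.1 == e'.1, e.1 == e'.2, e.2 == e'.1 | e.2 == e'.2]) ->
  matching_number G <= m.
Proof.
move=> Hlt Hinj; rewrite /matching_number; apply/bigmax_leqP => M HM.
set f := fun i : 'I_(size (edges G)) => c (nth (0,0) (edges G) i).
have memE (i : 'I_(size (edges G))) : nth (0,0) (edges G) (val i) \in edges G.
  apply: mem_nth. exact: ltn_ord.
rewrite cardE -(size_map f) -(size_iota 0 m).
apply: uniq_leq_size.
  rewrite map_inj_in_uniq ?enum_uniq // => i j; rewrite !mem_enum => iM jM fij.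
  apply/eqP; apply/negPn/negP => nij.
  move/forallP: HM => /(_ i); rewrite iM /= => /forallP /(_ j); rewrite jM nij /=.
  have := Hinj _ _ (memE i) (memE j) fij.
  by case/or4P=> /eqP ->; rewrite eqxx /= ?andbF.
move=> x /mapP [i _ ->]. rewrite mem_iota add0n /=. exact: Hlt (memE i).
Qed.

Lemma mn_lb (G : graph) (M : {set 'I_(size (edges G))}) :
  is_matching M -> #|M| <= matching_number G.
Proof. by move=> HM; apply: (leq_bigmax_cond M). Qed.

Lemma quad_mn : matching_number quadrangle = 2.
Proof.
apply/eqP; rewrite eqn_leq; apply/andP; split.
  apply: (@mn_ub _ 2 (fun e => if odd e.1 then e.1./2 else e.2./2)).
    by move=> e; rewrite !inE => /or4P [] /eqP ->.
  by move=> e e'; rewrite !inE => /or4P [] /eqP -> /or4P [] /eqP ->.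
pose M : {set 'I_(size (edges quadrangle))} := [set (@Ordinal 4 0 isT); (@Ordinal 4 2 isT)].
have -> : 2 = #|M| by rewrite cards2.
apply: mn_lb. rewrite /is_matching; apply/forallP => i; apply/implyP; rewrite !inE => /orP [] /eqP -> ; apply/forallP => j; apply/implyP; rewrite !inE => /orP [] /eqP -> ; by vm_compute.
Qed.

Section Rep.
Variable G : graph.
Let n := nverts G.
Let E := edges G.
Definition blk (k : nat) : seq (nat * nat) :=
  let e := nth (0, 0) E k in
  [:: (e.1, n + 2 * k); (n + 2 * k, e.2);
      (e.1, (n + 2 * k).+1); ((n + 2 * k).+1, e.2)].

Lemma edgesR : edges (replace_edges G) = flatten [seq blk k | k <- iota 0 (size E)].
Proof. by []. Qed.

Lemma nvertsR : nverts (replace_edges G) = n + 2 * size E.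
Proof. by []. Qed.

Lemma size_flat (s : seq nat) : size (flatten [seq blk k | k <- s]) = 4 * size s.
Proof. elim: s => [|x s IH] //.
have -> : flatten [seq blk k | k <- x :: s] = blk x ++ flatten [seq blk k | k <- s] by [].
rewrite size_cat IH /=; lia. Qed.

Lemma sizeR : size (edges (replace_edges G)) = 4 * size E.
Proof. by rewrite edgesR size_flat size_iota. Qed.

Lemma nth_flat (s : seq nat) i j : i < size s -> j < 4 ->
  nth (0,0) (flatten [seq blk k | k <- s]) (4 * i + j) = nth (0,0) (blk (nth 0 s i)) j.
Proof.
elim: s i => [|x s IH] [|i] // Hi Hj;
have -> : flatten [seq blk k | k <- x :: s] = blk x ++ flatten [seq blk k | k <- s] by [].
  by rewrite nth_cat /= muln0 add0n Hj.
rewrite nth_cat /= ifF; last by lia.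
have -> : 4 * i.+1 + j - 4 = 4 * i + j by lia.
by apply: IH.
Qed.

Lemma memR e : e \in edges (replace_edges G) -> exists2 k, k < size E & e \in blk k.
Proof.
rewrite edgesR => /flattenP [b /mapP [k]]; rewrite mem_iota add0n => /andP [_ Hk] -> He.
by exists k.
Qed.

Lemma blk_memR k e : k < size E -> e \in blk k -> e \in edges (replace_edges G).
Proof.
move=> Hk He; rewrite edgesR; apply/flattenP; exists (blk k) => //.
by apply/mapP; exists k; rewrite // mem_iota add0n.
Qed.

Definition wf (H : graph) := all (fun e => [&& e.1 < nverts H, e.2 < nverts H & e.1 != e.2]) (edges H).
Definition cov (H : graph) := all (fun v => has (fun e => (e.1 == v) || (e.2 == v)) (edges H)) (iota 0 (nverts H)).

Hypothesis wfG : wf G.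
Hypothesis covG : cov G.

Lemma wfE k : k < size E -> let e := nth (0,0) E k in [&& e.1 < n, e.2 < n & e.1 != e.2].
Proof. move=> Hk; exact: (allP wfG _ (mem_nth _ Hk)). Qed.

Lemma wfR : wf (replace_edges G).
Proof.
apply/allP => e /memR [k Hk]; rewrite nvertsR.
have := wfE Hk; rewrite /blk -/E.
case: (nth (0,0) E k) => a b /= /and3P [Ha Hb _].
by rewrite !inE => /or4P [] /eqP -> /=; apply/and3P; split; lia.
Qed.

Lemma covR : cov (replace_edges G).
Proof.
apply/allP => v; rewrite mem_iota add0n nvertsR => /andP [_ Hv].
case: (ltnP v n) => Hvn.
  have := allP covG v; rewrite mem_iota add0n -/n Hvn => /(_ isT) /hasP [e He Pe].
  have [k Hk Hek] : exists2 k, k < size E & e = nth (0,0) E k.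
    by exists (index e E); rewrite ?index_mem ?nth_index.
  case/orP: Pe => /eqP Hx.
    apply/hasP; exists (e.1, n + 2 * k); last by rewrite /= Hx eqxx.
    by apply: (blk_memR Hk); rewrite /blk -/E -Hek inE eqxx.
  apply/hasP; exists (n + 2 * k, e.2); last by rewrite /= Hx eqxx orbT.
  by apply: (blk_memR Hk); rewrite /blk -/E -Hek !inE eqxx orbT.
set k := (v - n) %/ 2.
have Hk : k < size E by rewrite /k; lia.
case: (eqVneq v (n + 2 * k)) => Hv2.
  apply/hasP; exists (n + 2 * k, (nth (0,0) E k).2); last by rewrite /= Hv2 eqxx.
  by apply: (blk_memR Hk); rewrite /blk -/E !inE eqxx orbT.
apply/hasP; exists ((n + 2 * k).+1, (nth (0,0) E k).2).
  by apply: (blk_memR Hk); rewrite /blk -/E !inE eqxx !orbT.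
by rewrite /=; apply/orP; left; apply/eqP; rewrite /k in Hv2 *; lia.
Qed.


Lemma ubR : matching_number (replace_edges G) <= n.
Proof.
apply: (@mn_ub _ n (fun e => if e.1 < n then e.1 else e.2)).
  move=> e /memR [k Hk]; have := wfE Hk; rewrite /blk -/E.
  case: (nth (0,0) E k) => a b /= /and3P [Ha Hb _].
  by rewrite !inE => /or4P [] /eqP -> /=; case: ifP => //; lia.
move=> [a b] [a' b'] _ _ /=.
by case: ifP => _; case: ifP => _ ->; rewrite eqxx ?orbT.
Qed.

Definition fv v := find (fun e => (e.1 == v) || (e.2 == v)) E.
Definition bt v := (nth (0,0) E (fv v)).1 != v.
Definition idx v := 4 * fv v + 3 * bt v.
Definition wv v := n + 2 * fv v + bt v.

Lemma fv_lt v : v < n -> fv v < size E.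
Proof.
move=> Hv; rewrite /fv -has_find; apply: (allP covG); by rewrite mem_iota.
Qed.

Lemma fv_P v : v < n -> let e := nth (0,0) E (fv v) in (e.1 == v) || (e.2 == v).
Proof.
move=> Hv; rewrite /fv; apply: (@nth_find _ (0,0) (fun e => (e.1 == v) || (e.2 == v))).
by rewrite has_find; apply: fv_lt.
Qed.

Lemma key u v : u < n -> v < n -> fv u = fv v -> bt u = bt v -> u = v.
Proof.
move=> Hu Hv Hf; have := fv_P Hu; have := fv_P Hv; rewrite /bt -Hf.
case: (nth (0,0) E (fv u)) => a b /=.
case: (eqVneq a u) => [<-|Hu']; case: (eqVneq a v) => [<-|Hv'] //=.
by move=> /eqP -> /eqP ->.
Qed.

Lemma idx_lt v : v < n -> idx v < size (edges (replace_edges G)).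
Proof. move=> Hv; have := fv_lt Hv; rewrite sizeR /idx; case: (bt v) => /=; lia. Qed.

Lemma idx_edge v : v < n ->
  let e := nth (0,0) (edges (replace_edges G)) (idx v) in
  (e == (v, wv v)) || (e == (wv v, v)).
Proof.
move=> Hv; rewrite edgesR; have Hf := fv_lt Hv; have HP := fv_P Hv.
have Hf' : fv v < size (iota 0 (size E)) by rewrite size_iota.
rewrite /idx (nth_flat Hf'); last by case: (bt v).
rewrite nth_iota // add0n /blk -/E /wv /bt -/E.
move: HP; case: (nth (0,0) E (fv v)) => a b /=.
case: eqP => [->|Ha] /= HP; first by rewrite addn0 eqxx.
by rewrite (eqP HP) addn1 eqxx orbT.
Qed.

Lemma lbR : n <= matching_number (replace_edges G).
Proof.
pose phi (v : 'I_n) : 'I_(size (edges (replace_edges G))) := Ordinal (idx_lt (ltn_ord v)).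
have phi_inj : injective phi.
  move=> u v /(congr1 val) /= Huv; apply: val_inj; apply: key; rewrite ?ltn_ord //.
    by move: Huv; rewrite /idx; case: (bt u); case: (bt v) => /=; lia.
  by move: Huv; rewrite /idx; case: (bt u); case: (bt v) => //=; lia.
have := @mn_lb (replace_edges G) [set phi v | v : 'I_n].
rewrite card_imset // card_ord; apply.
apply/forallP => i; apply/implyP => /imsetP [u _ ->].
apply/forallP => j; apply/implyP => /imsetP [v _ ->].
apply/implyP => Huv.
have Huv' : val u != val v by apply: contra Huv => /eqP /val_inj ->.
have Hw : wv u != wv v.
  apply: contra Huv' => /eqP Hw; apply/eqP; apply: key => //; rewrite ?ltn_ord //;
  by move: Hw; rewrite /wv; case: (bt u); case: (bt v) => //=; lia.
have Hu := ltn_ord u; have Hv := ltn_ord v.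
have Hwu : n <= wv u by rewrite /wv; lia.
have Hwv : n <= wv v by rewrite /wv; lia.
have := idx_edge Hu; have := idx_edge Hv; rewrite /=.
move=> /orP [] /eqP -> /orP [] /eqP -> /=; apply/and4P; split;
  rewrite ?(eq_sym (wv v)) //; apply/eqP; lia.
Qed.
End Rep.

Lemma invF h : [/\ wf (F_aux h), cov (F_aux h), size (edges (F_aux h)) = 4 ^ h.+1
   & 3 * nverts (F_aux h) = 2 * 4 ^ h.+1 + 4].
Proof.
elim: h => [|h [wfh covh szh nvh]]; first by split.
rewrite /=; split; first exact: wfR.
- exact: covR.
- by rewrite sizeR szh (expnS 4 h.+1).
- rewrite szh (expnS 4 h.+1); lia.
Qed.

Theorem theorem1 (g : nat) : 1 <= g -> 6 * matching_number (F g) = 4 ^ g + 8.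
Proof.
case: g => [|[|h]] // _; first by rewrite /F /= quad_mn.
have [wfh covh _ nvh] := invF h.
have -> : F h.+2 = replace_edges (F_aux h) by [].
have -> : matching_number (replace_edges (F_aux h)) = nverts (F_aux h).
  by apply/eqP; rewrite eqn_leq ubR // lbR.
rewrite (expnS 4 h.+1); lia.
Qed.
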